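(* Let $\nu:\mathcal{P}(\mathbf{N})\to\mathbf{R}$ be an abstract upper density and let $\mathcal{Z}_\nu=\{A\subseteq\mathbf{N}:\nu(A)=0\}$. Then there exists a normalized capacity $\rho:\mathscr{B}(\mathrm{Ult}(\mathcal{Z}_\nu))\to\mathbf{R}$ such that for every $A\subseteq\mathbf{N}$, $$\nu(A)=\int_{\mathrm{Ult}(\mathcal{Z}_\nu)}\mu_{\mathcal{F}}(A)\,\mathrm{d}\rho(\mathcal{F}).$$
   Context: An abstract upper density is a set function $\nu:\mathcal{P}(\mathbf{N})\to\mathbf{R}$ that is a normalized capacity (monotone, $\nu(\emptyset)=0$, $\nu(\mathbf{N})=1$), diffuse ($\nu(A)=0$ for every finite $A$), and subadditive ($\nu(A\cup B)\le\nu(A)+\nu(B)$). For an ideal $\mathcal{I}$ on $\mathbf{N}$ (closed under subsets and finite unions, not containing $\mathbf{N}$, containing all finite sets) with dual filter $\mathcal{I}^\star=\{A:\mathbf{N}\setminus A\in\mathcal{I}\}$: $\mathrm{Ult}(\mathcal{I})$ is the set of ultrafilters $\mathcal{F}$ on $\mathbf{N}$ with $\mathcal{I}^\star\subseteq\mathcal{F}$, with the topology induced from the Stone–Čech space $\beta\mathbf{N}$ (basic clopen sets $\{\mathcal{F}:A\in\mathcal{F}\}$), $\mathscr{B}$ is the Borel $\sigma$-algebra, and $\mu_{\mathcal{F}}(A)=1$ if $A\in\mathcal{F}$ and $0$ otherwise. A normalized capacity on a $\sigma$-algebra is a monotone set function with value $0$ at $\emptyset$ and $1$ at the whole space. The Choquet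 integral of a bounded function $f$ with respect to a normalized capacity $\rho$ on $S$ is $\int_0^\infty\rho(f\ge t)\,\mathrm{d}t+\int_{-\infty}^0[\rho(f\ge t)-1]\,\mathrm{d}t$. *)

(* Defs.v *)
From HB Require Import structures.
From mathcomp Require Import all_boot all_order all_algebra.
From mathcomp Require Import all_classical all_reals all_analysis.
Set Implicit Arguments. Unset Strict Implicit. Unset Printing Implicit Defensive.
Import Order.TTheory GRing.Theory Num.Theory.
Local Open Scope classical_set_scope.
Local Open Scope ring_scope.

Definition abstract_upper_density {R : realType} (nu : set nat -> R) : Prop :=
  [/\ (forall A B : set nat, A `<=` B -> nu A <= nu B),
      nu set0 = 0, nu setT = 1,
      (forall A : set nat, finite_set A -> nu A = 0) &
      (forall A B : set nat, nu (A `|` B) <= nu A + nu B)].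

Definition zero_ideal {R : realType} (nu : set nat -> R) : set (set nat) :=
  [set A | nu A = 0].

Definition dual_filter (I : set (set nat)) : set (set nat) :=
  [set A | I (~` A)].

Definition is_ultrafilter (F : set (set nat)) : Prop :=
  [/\ F setT, ~ F set0,
      (forall A B, A `<=` B -> F A -> F B),
      (forall A B, F A -> F B -> F (A `&` B)) &
      (forall A, F A \/ F (~` A))].

Definition Ult (I : set (set nat)) : set (set (set nat)) :=
  [set F | is_ultrafilter F /\ dual_filter I `<=` F].

Definition ult_basic (I : set (set nat)) (A : set nat) : set (set (set nat)) :=
  [set F | Ult I F /\ F A].

(** Open sets of Ult(I) for the topology induced from beta N. *)
Definition ult_open (I : set (set nat)) (U : set (set (set nat))) : Prop :=
  U `<=` Ult I /\
  forall F, U F -> exists A : set nat, F A /\ ult_basic I A `<=` U.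

Definition ult_borel (I : set (set nat)) : set (set (set (set nat))) :=
  <<s Ult I, ult_open I >>.

Definition normalized_capacity {R : realType} {T : Type} (S : set T)
  (Sigma : set (set T)) (rho : set T -> R) : Prop :=
  [/\ rho set0 = 0, rho S = 1 &
      (forall A B, Sigma A -> Sigma B -> A `<=` B -> rho A <= rho B)].

Definition mu_uf {R : realType} (F : set (set nat)) (A : set nat) : R :=
  if `[< F A >] then 1 else 0.

Definition choquet {R : realType} {T : Type} (S : set T) (rho : set T -> R)
  (f : T -> R) : R :=
  (fine (\int[@lebesgue_measure R]_(t in `[0, +oo[%classic)
            (rho [set x | S x /\ t <= f x])%:E)
   + fine (\int[@lebesgue_measure R]_(t in `]-oo, 0[%classic)
            (rho [set x | S x /\ t <= f x] - 1)%:E))%R.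

(* Main.v *)
Require Import Defs.
From HB Require Import structures.
From mathcomp Require Import all_boot all_order all_algebra.
From mathcomp Require Import all_classical all_reals all_analysis.
From mathcomp Require Import measurable_realfun.
Import Order.TTheory GRing.Theory Num.Theory.
Local Open Scope classical_set_scope.
Local Open Scope ring_scope.

Section S.
Variables (R : realType) (nu : set nat -> R).
Hypothesis hnu : abstract_upper_density nu.

Lemma nu_ge0 A : 0 <= nu A.
Proof. case: hnu => mon n0 _ _ _; rewrite -n0; apply: mon; exact: sub0set. Qed.

Lemma nu_mon A B : A `<=` B -> nu A <= nu B.
Proof. by case: hnu => mon _ _ _ _; apply: mon. Qed.

Lemma nu_sub A B : nu (A `|` B) <= nu A + nu B.
Proof. by case: hnu => _ _ _ _ sub; apply: sub. Qed.

Lemma exists_ult C : nu C != 0 -> exists F, Ult (zero_ideal nu) F /\ F C.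
Proof.
move=> nC.
pose G := [set B : set nat | exists D, nu D = 0 /\ C `&` ~` D `<=` B].
have PG : ProperFilter G.
  apply: Build_ProperFilter_ex.
    move=> B [D [D0 sB]]; apply: contrapT => nB.
    move/eqP: nC; apply; apply/eqP; rewrite eq_le nu_ge0 andbT -D0.
    apply: nu_mon => n Cn; apply: contrapT => nDn.
    by apply: nB; exists n; apply: sB.
  split.
  - exists set0; split; first by case: hnu.
    by [].
  - move=> B1 B2 [D1 [D10 s1]] [D2 [D20 s2]]; exists (D1 `|` D2); split.
      apply/eqP; rewrite eq_le nu_ge0 andbT.
      by apply: le_trans (nu_sub _ _) _; rewrite D10 D20 addr0.
    move=> n [Cn nD]; split.
      by apply: s1; split => // H; apply: nD; left.
    by apply: s2; split => // H; apply: nD; right.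
  - by move=> P Q PQ [D [D0 s]]; exists D; split => //; apply: subset_trans PQ.
have [U [UU GU]] := ultraFilterLemma PG.
have UF : ProperFilter U by exact: ultra_proper.
exists U; split; last first.
  apply: GU; exists set0; split; first by case: hnu.
  by move=> n [].
split; last first.
  move=> B; rewrite /dual_filter /zero_ideal /= => hB; apply: GU.
  by exists (~` B); split => // n [_]; rewrite setCK.
split.
- exact: filterT.
- by move=> U0; have := @filter_not_empty _ U UF; rewrite /=; apply.
- by move=> A B AB; apply: filterS.
- by move=> A B; apply: filterI.
- by move=> A; apply: in_ultra_setVsetC.
Qed.

Let Z := zero_ideal nu.

Lemma basic_le A B : ult_basic Z A `<=` ult_basic Z B -> nu A <= nu B.
Proof.
move=> sAB.
have [/eqP h|h] := boolP (nu (A `&` ~` B) == 0).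
  have sA : A `<=` (A `&` ~` B) `|` B.
    by move=> n An; have [Bn|nBn] := pselect (B n); [right|left].

  apply: le_trans (nu_mon _ _ sA) _.
  by apply: le_trans (nu_sub _ _) _; rewrite h add0r.
have [F [UF FAB]] := exists_ult _ h.
have [[FT F0 FS FI _] _] := UF.
have FA : F A by apply: FS FAB => n [].
have [_ FB] := sAB F (conj UF FA).
exfalso; apply: F0; have := FI _ _ FAB FB.
by apply: FS => n [[_ ?] ?].
Qed.

Definition rho (U : set (set (set nat))) : R :=
  inf [set nu B | B in [set B | U `&` Ult Z `<=` ult_basic Z B]].

Lemma rho_le U B : U `&` Ult Z `<=` ult_basic Z B -> rho U <= nu B.
Proof.
move=> h; apply: ge_inf; last by exists B.
by exists 0 => _ [C _ <-]; apply: nu_ge0.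
Qed.

Lemma rho_ge U c : (forall B, U `&` Ult Z `<=` ult_basic Z B -> c <= nu B) ->
  c <= rho U.
Proof.
move=> h; apply: lb_le_inf.
  exists (nu setT), setT => // F [_ UF]; split => //.
  by case: UF => -[].
by move=> _ [B hB <-]; apply: h.
Qed.

Lemma rho_basic A : rho (ult_basic Z A) = nu A.
Proof.
apply/eqP; rewrite eq_le; apply/andP; split.
  by apply: rho_le => F [].
apply: rho_ge => B hB; apply: basic_le => F FA; apply: hB; split => //.
by case: FA.
Qed.

Lemma rho_mono U V : U `<=` V -> rho U <= rho V.
Proof.
move=> UV; apply: rho_ge => B hB; apply: rho_le.
by apply: subset_trans hB; apply: setSI.
Qed.

Lemma rho0 : rho set0 = 0.
Proof.
apply/eqP; rewrite eq_le; apply/andP; split.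
  have <- : nu set0 = 0 by case: hnu.
  by apply: rho_le => F [].
by apply: rho_ge => B _; apply: nu_ge0.
Qed.

Lemma rhoT : rho (Ult Z) = 1.
Proof.
have <- : nu setT = 1 by case: hnu.
have -> : Ult Z = ult_basic Z setT.
  apply/seteqP; split => F; last by case.
  by move=> UF; split => //; case: UF => -[].
exact: rho_basic.
Qed.

End S.

Lemma mu_uf_cases (R : realType) (F : set (set nat)) A :
  (F A /\ mu_uf F A = 1 :> R) \/ (~ F A /\ mu_uf F A = 0 :> R).
Proof. by rewrite /mu_uf; case: asboolP => h; [left|right]. Qed.

Theorem corollary1p2 (R : realType) (nu : set nat -> R) :
  abstract_upper_density nu ->
  exists rho : set (set (set nat)) -> R,
    normalized_capacity (Ult (zero_ideal nu)) (ult_borel (zero_ideal nu)) rho /\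
    forall A : set nat,
      nu A = choquet (Ult (zero_ideal nu)) rho (fun F => mu_uf F A).
Proof.
move=> hnu; exists (@rho R nu); split.
  split; [exact: rho0|exact: rhoT|by move=> U V _ _; apply: rho_mono].
move=> A; rewrite /choquet.
set E := fun t : R => [set x | Ult (zero_ideal nu) x /\ t <= mu_uf x A].
have EN : forall t, t < 0 -> E t = Ult (zero_ideal nu).
  move=> t t0; apply/seteqP; split => x; first by case.
  move=> Ux; split => //; apply: le_trans (ltW t0) _.
  by case: (mu_uf_cases R x A) => -[_ ->].
have EP : forall t, 0 < t -> t <= 1 -> E t = ult_basic (zero_ideal nu) A.
  move=> t t0 t1; apply/seteqP; split => x /= [Ux hx]; split => //.
    by case: (mu_uf_cases R x A) hx => -[// _ ->]; rewrite leNgt t0.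
  by case: (mu_uf_cases R x A) => -[// _ ->].
have EG : forall t, 1 < t -> E t = set0.
  move=> t t1; apply/seteqP; split => x // [Ux].
  case: (mu_uf_cases R x A) => -[_ ->]; first by rewrite leNgt t1.
  by rewrite leNgt (lt_trans _ t1).
rewrite [X in _ + fine X](_ : _ = 0%E); last first.
  apply: integral0_eq => t; rewrite /= in_itv /= => t0.
  by have := EN t t0; rewrite /E => ->; rewrite rhoT // subrr.
rewrite addr0.
have eqg : {in (`]0, +oo[%classic : set R), (fun t => (rho R nu (E t))%:E) =1
    (fun t => (nu A * \1_(`]0, 1]%classic) t)%:E)}.
  move=> t; rewrite inE /= in_itv /= andbT => t0.
  rewrite indicE; case: (leP t 1) => t1.
    rewrite (EP t t0 t1) rho_basic // mem_set ?mulr1 //.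
    by rewrite /= in_itv /= t0 t1.
  rewrite (EG t t1) rho0 // memNset ?mulr0 //.
  by rewrite /= in_itv /= t0 /= leNgt t1.
have mI : measurable (`]0, +oo[%classic : set R) by exact: measurable_itv.
have mg : measurable_fun (`]0, +oo[%classic : set R) ((fun t => (rho R nu (E t))%:E) : R -> \bar R).
  apply: (proj2 (measurable_fun_eqP _ eqg)); apply/measurable_EFinP.
  apply: measurable_funM => //; apply: measurable_indic; exact: measurable_itv.
rewrite -(@integral_setD1 _ _ 0); rewrite ?setDitv1l //.
under eq_integral => x hx do rewrite -/(E x) (eqg x hx).
have hZ : (\int[lebesgue_measure]_(x in (`]0%R, +oo[%classic : set R))
    (nu A * \1_(`]0%R, 1%R]%classic : set R) x)%:E =
    (nu A)%:E * \int[lebesgue_measure]_(x in (`]0%R, +oo[%classic : set R))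
    (\1_(`]0%R, 1%R]%classic : set R) x)%:E)%E.
  apply: (integralZl_indic (m := @lebesgue_measure R) mI (fun _ : R => (`]0, 1]%classic : set R)) (nu A)).
    by move=> h; exfalso; move: h; rewrite ltNge nu_ge0.
  exact: measurable_itv.
rewrite hZ.
have hI : (\int[lebesgue_measure]_(x in (`]0%R, +oo[%classic : set R))
    (\1_(`]0%R, 1%R]%classic : set R) x)%:E =
    lebesgue_measure ((`]0%R, 1%R]%classic : set R) `&` `]0%R, +oo[%classic))%E.
  apply: (integral_indic (@lebesgue_measure R)); exact: measurable_itv.
rewrite hI.
rewrite setIidl; last by move=> x /=; rewrite !in_itv /= => /andP[->].
rewrite lebesgue_measure_itv /=.
by rewrite lte01 oppr0 adde0 mule1.
Qed.
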